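(* Let $T=(V,\Pi)$ be a path system with $n$ nodes, $p$ paths, bridge girth $>3$, maximum path length $L$, and average path length at least a sufficiently large absolute constant. Then $$\|T\|_2^2:=\sum_{\pi\in\Pi}|\pi|^2=O\left(nL+p^{1/3}n^{4/3}\right).$$
   Context: A path system is a pair $T=(V,\Pi)$ where $V$ is a finite ground set of nodes and $\Pi$ is a multiset of finite sequences of nodes (paths), each containing each node at most once; $|\pi|$ is the number of nodes of $\pi$ (its length), and the average path length is $\sum_{\pi}|\pi|/p$. Write $x<_\pi y$ if $x,y\in\pi$ and $x$ strictly precedes $y$ in $\pi$. A $b$-bridge consists of $b$ distinct nodes $v_1,\dots,v_b$ and $b$ distinct paths $\pi_1,\dots,\pi_b$ with $v_i<_{\pi_i}v_{i+1}$ for $1\le i\le b-1$ and $v_1<_{\pi_b}v_b$. The bridge girth is the least $b$ for which there is a $b$-bridge ($\infty$ if none). *)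

(* Defs.v *)
From Stdlib Require Import Reals.
From mathcomp Require Import all_boot.
Set Implicit Arguments. Unset Strict Implicit. Unset Printing Implicit Defensive.

(* A path system over a finite node type V: a multiset of paths, represented
   as a list of sequences of nodes (repetitions allowed = multiset). *)
Definition path_system (V : finType) (P : seq (seq V)) : Prop := all uniq P.

Definition precedes (V : eqType) (pi : seq V) (x y : V) : bool :=
  [&& x \in pi, y \in pi & index x pi < index y pi].

(* A b-bridge (0-indexed): distinct nodes v 0, ..., v (b-1) and distinct paths
   (distinct positions k 0, ..., k (b-1) in the multiset P) such that
   v i <_{P(k i)} v (i+1) for i < b-1, and v 0 <_{P(k (b-1))} v (b-1). *)
Definition bridge (V : finType) (P : seq (seq V)) (b : nat) : Prop :=
  exists (v : nat -> V) (k : nat -> nat),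
    (forall i j, i < b -> j < b -> v i = v j -> i = j) /\
    (forall i j, i < b -> j < b -> k i = k j -> i = j) /\
    (forall i, i < b -> k i < size P) /\
    (forall i, i.+1 < b -> precedes (nth [::] P (k i)) (v i) (v i.+1)) /\
    precedes (nth [::] P (k b.-1)) (v 0) (v b.-1).

Definition bridge_girth_gt3 (V : finType) (P : seq (seq V)) : Prop :=
  forall b, b <= 3 -> ~ bridge P b.

Definition total_length (V : Type) (P : seq (seq V)) : nat :=
  \sum_(pi <- P) size pi.

Definition max_length (V : Type) (P : seq (seq V)) : nat :=
  \max_(pi <- P) size pi.

Definition sq_norm (V : Type) (P : seq (seq V)) : nat :=
  \sum_(pi <- P) (size pi) ^ 2.

(* Main.v *)
Require Import Defs.
From Stdlib Require Import Reals Lra Psatz.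
From mathcomp Require Import all_boot zify.
Set Implicit Arguments. Unset Strict Implicit. Unset Printing Implicit Defensive.

Lemma sum_le1 (I : finType) (F : pred I) :
  (forall i j, F i -> F j -> i = j) -> \sum_(i : I) (F i : nat) <= 1.
Proof.
move=> H; case: (pickP F) => [i0 Fi0|none].
  rewrite (bigD1 i0) //= big1 ?Fi0 // => j /eqP nji.
  by case Fj: (F j) => //; case: nji; apply: H.
by rewrite big1 // => i _; rewrite none.
Qed.

Lemma sum_le1_w (I : finType) (F : pred I) (G : I -> nat) c :
  (forall i j, F i -> F j -> i = j) -> (forall i, F i -> G i <= c) ->
  \sum_(i : I) (F i : nat) * G i <= c.
Proof.
move=> H HG; case: (pickP F) => [i0 Fi0|none].
  rewrite (bigD1 i0) //= big1 ?Fi0 ?mul1n ?addn0 ?HG // => j /eqP nji.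
  by case Fj: (F j) => //; case: nji; apply: H.
by rewrite big1 // => i _; rewrite none.
Qed.

Lemma cauchy (I : finType) (F : I -> nat) :
  (\sum_i F i) ^ 2 <= #|I| * \sum_i F i ^ 2.
Proof.
have E1 : (\sum_i F i) ^ 2 = \sum_i \sum_j F i * F j.
  by rewrite expnS expn1 big_distrl /=; apply: eq_bigr => i _; rewrite big_distrr.
have E2 : 2 * (#|I| * \sum_i F i ^ 2) = \sum_i \sum_j (F i ^ 2 + F j ^ 2).
  symmetry; rewrite mul2n -addnn.
  under eq_bigr => i _ do rewrite big_split /= sum_nat_const.
  rewrite big_split /= -big_distrr /=; congr (_ + _).
  by rewrite sum_nat_const.
suff : 2 * (\sum_i F i) ^ 2 <= 2 * (#|I| * \sum_i F i ^ 2) by rewrite leq_pmul2l.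
rewrite E1 E2 big_distrr /=; apply: leq_sum => i _; rewrite big_distrr /=.
apply: leq_sum => j _.
move: (F i) (F j) => a b; rewrite !expnS !expn0 !muln1.
have [h|h] := leqP a b.
  have -> : b = a + (b - a) by lia.
  move: (b - a) => c; nia.
have -> : a = b + (a - b) by lia.
move: (a - b) => c; nia.
Qed.

Lemma sum_index (V : finType) (s : seq V) (G : nat -> nat) : uniq s ->
  \sum_(x : V) (if x \in s then G (index x s) else 0) = \sum_(j < size s) G j.
Proof.
move=> us; rewrite -big_mkcond /= -big_uniq //.
case: s us => [|a s'] us; first by rewrite big_nil big_ord0.
rewrite (big_nth a) big_mkord; apply: eq_bigr => i _.
by rewrite index_uniq.
Qed.

Definition Pk (V : finType) (P : seq (seq V)) (k : 'I_(size P)) : seq V := nth [::] P k.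
Arguments Pk {V} P k.

Lemma uniq_Pk (V : finType) (P : seq (seq V)) k : path_system P -> uniq (Pk P k).
Proof. by move=> /(all_nthP [::]) H; apply: H. Qed.

Lemma prec_neq (V : eqType) (s : seq V) u v : precedes s u v -> u != v.
Proof. by case/and3P=> _ _; apply: contraTneq => ->; rewrite ltnn. Qed.

Lemma prec_total (V : eqType) (s : seq V) u v : uniq s -> u \in s -> v \in s -> u != v ->
  precedes s u v || precedes s v u.
Proof.
move=> us us1 vs nuv; rewrite /precedes us1 vs /=.
case: (ltngtP (index u s) (index v s)) => // E.
by case/eqP: nuv; rewrite -(nth_index u us1) E nth_index.
Qed.

Lemma no2 (V : finType) (P : seq (seq V)) (k1 k2 : 'I_(size P)) u v :
  bridge_girth_gt3 P -> k1 != k2 -> precedes (Pk P k1) u v -> precedes (Pk P k2) u v -> False.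
Proof.
move=> Hg nk p1 p2; apply: (Hg 2 isT).
exists (fun i => if i == 0 then u else v), (fun i => if i == 0 then val k1 else val k2).
have nuv := prec_neq p1.
split; first by move=> [|[|i]] [|[|j]] //= _ _ E; move: nuv; rewrite E eqxx.
split; first by move=> [|[|i]] [|[|j]] //= _ _ E; by move: nk; rewrite -val_eqE /= E eqxx.
split; first by move=> [|[|i]] //= _.
split; first by move=> [|i] //= _.
exact: p2.
Qed.

Lemma no3 (V : finType) (P : seq (seq V)) (k1 k2 k3 : 'I_(size P)) u v w :
  bridge_girth_gt3 P -> k1 != k2 -> k2 != k3 -> k1 != k3 ->
  precedes (Pk P k1) u v -> precedes (Pk P k2) v w -> precedes (Pk P k3) u w -> False.
Proof.
move=> Hg n12 n23 n13 p1 p2 p3; apply: (Hg 3 isT).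
exists (fun i => if i == 0 then u else if i == 1 then v else w),
       (fun i => if i == 0 then val k1 else if i == 1 then val k2 else val k3).
have nuv := prec_neq p1; have nvw := prec_neq p2; have nuw := prec_neq p3.
split.
  by move=> [|[|[|i]]] [|[|[|j]]] //= _ _ E; move: nuv nvw nuw; rewrite E !eqxx.
split.
  move: n12 n23 n13; rewrite -!val_eqE /= => n12 n23 n13.
  by move=> [|[|[|i]]] [|[|[|j]]] //= _ _ E; move: n12 n23 n13; rewrite E !eqxx.
split; first by move=> [|[|[|i]]] //= _.
split; first by move=> [|[|i]] //= _.
exact: p3.
Qed.

Definition good (V : finType) (P : seq (seq V)) (k k' : 'I_(size P)) (y : V) : bool :=
  [forall w, ~~ ((w \in Pk P k') && precedes (Pk P k) y w)].
Arguments good {V} P k k' y.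

Lemma precL (V : eqType) (s : seq V) u v : precedes s u v -> u \in s.
Proof. by case/and3P. Qed.
Lemma precR (V : eqType) (s : seq V) u v : precedes s u v -> v \in s.
Proof. by case/and3P. Qed.

Lemma rev_prec (V : finType) (P : seq (seq V)) (k k1 : 'I_(size P)) y w :
  path_system P -> bridge_girth_gt3 P -> k1 != k ->
  precedes (Pk P k) y w -> w \in Pk P k1 -> y \in Pk P k1 -> precedes (Pk P k1) w y.
Proof.
move=> Hps Hg nk pw wk yk.
have nwy : w != y by rewrite eq_sym; apply: prec_neq pw.
case/orP: (prec_total (uniq_Pk k1 Hps) wk yk nwy) => // h; exfalso.
by apply: (no2 Hg _ pw h); rewrite eq_sym.
Qed.

Lemma bad_unique (V : finType) (P : seq (seq V)) (k k1 k2 : 'I_(size P)) y :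
  path_system P -> bridge_girth_gt3 P ->
  k1 != k -> k2 != k -> y \in Pk P k1 -> y \in Pk P k2 ->
  ~~ good P k k1 y -> ~~ good P k k2 y -> k1 = k2.
Proof.
move=> Hps Hg n1 n2 yk1 yk2 /forallPn [w1] /negPn /andP [w1k1 pw1]
  /forallPn [w2] /negPn /andP [w2k2 pw2].
apply/eqP; apply/negPn/negP => n12.
have q1 := rev_prec Hps Hg n1 pw1 w1k1 yk1.
have q2 := rev_prec Hps Hg n2 pw2 w2k2 yk2.
case: (eqVneq w1 w2) => [e|nw].
  by subst w2; apply: (no2 Hg n12 q1 q2).
case/orP: (prec_total (uniq_Pk k Hps) (precR pw1) (precR pw2) nw) => h.
  apply: (no3 Hg _ _ _ h q2 q1); by rewrite // eq_sym.
apply: (no3 Hg _ _ _ h q1 q2); by rewrite // eq_sym.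
Qed.

Lemma T_inj (V : finType) (P : seq (seq V)) (k k1 k2 : 'I_(size P)) x y1 y2 z :
  path_system P -> bridge_girth_gt3 P ->
  k != k1 -> good P k k1 y1 -> precedes (Pk P k) x y1 -> precedes (Pk P k1) y1 z ->
  k != k2 -> good P k k2 y2 -> precedes (Pk P k) x y2 -> precedes (Pk P k2) y2 z ->
  (y1, k1) = (y2, k2).
Proof.
move=> Hps Hg n1 g1 a1 b1 n2 g2 a2 b2.
case: (eqVneq k1 k2) => [e|n12].
  subst k2; case: (eqVneq y1 y2) => [->//|ny].
  case/orP: (prec_total (uniq_Pk k Hps) (precR a1) (precR a2) ny) => h.
    by move/forallP: g1 => /(_ y2); rewrite (precL b2) h.
  by move/forallP: g2 => /(_ y1); rewrite (precL b1) h.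
exfalso; case: (eqVneq y1 y2) => [e|ny].
  by subst y2; apply: (no2 Hg n12 b1 b2).
case/orP: (prec_total (uniq_Pk k Hps) (precR a1) (precR a2) ny) => h.
  by apply: (no3 Hg _ _ _ h b2 b1); rewrite // eq_sym.
by apply: (no3 Hg _ _ _ h b1 b2); rewrite // eq_sym.
Qed.

Definition cnd (V : finType) (P : seq (seq V)) (k : 'I_(size P)) (x : V) (k' : 'I_(size P)) (y z : V) : bool :=
  [&& k != k', good P k k' y, precedes (Pk P k) x y & precedes (Pk P k') y z].
Arguments cnd {V} P k x k' y z.

Lemma sum_lt n i : \sum_(j < n) (j < i : nat) = minn n i.
Proof. elim: n => [|n IH]; first by rewrite big_ord0 min0n. rewrite big_ord_recr /= IH; case: (ltnP n i) => h /=; lia. Qed.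

Lemma sum_gt n i : \sum_(j < n) (i < j : nat) = n - i.+1.
Proof. elim: n => [|n IH]; first by rewrite big_ord0. rewrite big_ord_recr /= IH; case: (ltnP i n) => h /=; lia. Qed.

Lemma cnt_before (V : finType) (s : seq V) y : uniq s -> y \in s ->
  \sum_(x : V) (precedes s x y : nat) = index y s.
Proof.
move=> us ys.
rewrite (eq_bigr (fun x => if x \in s then (index x s < index y s : nat) else 0)); last first.
  by move=> x _; rewrite /precedes ys; case: (x \in s).
rewrite (sum_index (fun j => (j < index y s : nat))) // sum_lt.
by apply/minn_idPr; apply: ltnW; rewrite index_mem.
Qed.

Lemma cnt_after (V : finType) (s : seq V) y : uniq s -> y \in s ->
  \sum_(z : V) (precedes s y z : nat) = size s - (index y s).+1.
Proof.
move=> us ys.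
rewrite (eq_bigr (fun z => if z \in s then (index y s < index z s : nat) else 0)); last first.
  by move=> x _; rewrite /precedes ys; case: (x \in s).
by rewrite (sum_index (fun j => (index y s < j : nat))) // sum_gt.
Qed.

Lemma Tupper (V : finType) (P : seq (seq V)) :
  path_system P -> bridge_girth_gt3 P ->
  \sum_(k : 'I_(size P)) \sum_(y : V) \sum_(k' : 'I_(size P)) \sum_(x : V) \sum_(z : V)
     (cnd P k x k' y z : nat) <= #|V| * \sum_(k : 'I_(size P)) size (Pk P k).
Proof.
move=> Hps Hg; rewrite big_distrr /=; apply: leq_sum => k _.
under eq_bigr => y _ do rewrite exchange_big.
under eq_bigr => y _ do under eq_bigr => x _ do rewrite exchange_big.
rewrite exchange_big /=.
under eq_bigr => x _ do rewrite exchange_big.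
apply: (@leq_trans (\sum_(x : V) \sum_(z : V) (x \in Pk P k : nat))).
  apply: leq_sum => x _; apply: leq_sum => z _.
  case xk: (x \in Pk P k); last first.
    rewrite big1 // => y _; rewrite big1 // => k' _.
    by case c: (cnd P k x k' y z) => //; move/and4P: c => [_ _ /precL]; rewrite xk.
  rewrite pair_bigA /=.
  apply: (sum_le1 (F := fun q : V * 'I_(size P) => cnd P k x q.2 q.1 z)).
  move=> [y1 k1] [y2 k2] /= /and4P [n1 g1 a1 b1] /and4P [n2 g2 a2 b2].
  exact: (T_inj Hps Hg n1 g1 a1 b1 n2 g2 a2 b2).
rewrite (eq_bigr (fun x => (x \in Pk P k : nat) * #|V|)); last first.
  by move=> x _; rewrite sum_nat_const mulnC.
rewrite -big_distrl /= mulnC leq_mul2l; apply/orP; right; apply: eq_leq.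
rewrite (eq_bigr (fun x => if x \in Pk P k then 1 else 0)); last by move=> x _; case: (_ \in _).
by rewrite (sum_index (fun _ => 1)) ?uniq_Pk // sum_nat_const card_ord muln1.
Qed.

Definition m (V : finType) (P : seq (seq V)) (k : 'I_(size P)) (y : V) : nat :=
  if y \in Pk P k then minn (index y (Pk P k)) (size (Pk P k) - (index y (Pk P k)).+1) else 0.
Arguments m {V} P k y.

Lemma size_le_max (V : finType) (P : seq (seq V)) (k : 'I_(size P)) :
  size (Pk P k) <= max_length P.
Proof.
rewrite /max_length; apply: (@leq_bigmax_seq _ P predT (fun pi : seq V => size pi) (Pk P k)) => //.
by rewrite /Pk mem_nth.
Qed.

Lemma m_le (V : finType) (P : seq (seq V)) k y : m P k y <= max_length P.
Proof.
rewrite /m; case: ifP => // yk; apply: leq_trans (size_le_max k).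
by apply: leq_trans (geq_minl _ _) _; apply: ltnW; rewrite index_mem.
Qed.

Lemma lower_kyk (V : finType) (P : seq (seq V)) (k k' : 'I_(size P)) y :
  path_system P ->
  m P k y * (((k != k') && good P k k' y : nat) * m P k' y) <=
  \sum_(x : V) \sum_(z : V) (cnd P k x k' y z : nat).
Proof.
move=> Hps.
have -> : \sum_(x : V) \sum_(z : V) (cnd P k x k' y z : nat) =
   ((k != k') && good P k k' y : nat) * ((\sum_(x : V) (precedes (Pk P k) x y : nat))
     * \sum_(z : V) (precedes (Pk P k') y z : nat)).
  rewrite big_distrl big_distrr /=; apply: eq_bigr => x _.
  rewrite big_distrr big_distrr /=; apply: eq_bigr => z _.
  by rewrite /cnd; case: (k != k'); case: (good _ _ _ _); case: (precedes _ x y); case: (precedes _ y z).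
rewrite /m; case yk: (y \in Pk P k); last by rewrite mul0n.
case yk': (y \in Pk P k'); last by rewrite !muln0.
rewrite cnt_before ?uniq_Pk // cnt_after ?uniq_Pk //.
set c := (_ && _ : nat).
rewrite mulnA mulnCA mulnA; apply: leq_mul; first by apply: leq_mul => //; apply: geq_minl.
exact: geq_minr.
Qed.

Lemma M_le (V : finType) (P : seq (seq V)) (k : 'I_(size P)) y :
  path_system P -> bridge_girth_gt3 P ->
  \sum_(k' : 'I_(size P)) m P k' y <=
  m P k y + \sum_(k' : 'I_(size P)) ((k != k') && good P k k' y : nat) * m P k' y + max_length P.
Proof.
move=> Hps Hg.
apply: (@leq_trans (\sum_(k' : 'I_(size P)) ((k' == k : nat) * m P k' y
   + ((k != k') && good P k k' y : nat) * m P k' y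
   + ([&& k' != k, ~~ good P k k' y & y \in Pk P k'] : nat) * m P k' y))).
  apply: leq_sum => k' _.
  case: (eqVneq k' k) => [->|nk] /=; first by rewrite mul1n -addnA leq_addr.
  rewrite mul0n add0n; case: (good P k k' y) => /=; first by rewrite /= mul1n mul0n ?addn0.
  case yk: (y \in Pk P k'); first by rewrite /= mul1n mul0n ?addn0.
  by rewrite /m yk.
rewrite !big_split /= -!addnA leq_add //.
  apply: (sum_le1_w (F := fun k' => k' == k)); first by move=> i j /eqP -> /eqP ->.
  by move=> i /eqP ->.
rewrite leq_add2l.
apply: sum_le1_w => [i j /and3P [ni gi yi] /and3P [nj gj yj]|i _]; last exact: m_le.
exact: (bad_unique Hps Hg ni nj yi yj gi gj).
Qed.

Lemma key (V : finType) (P : seq (seq V)) :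
  path_system P -> bridge_girth_gt3 P ->
  \sum_(y : V) (\sum_(k : 'I_(size P)) m P k y) ^ 2 <=
  #|V| * \sum_(k : 'I_(size P)) size (Pk P k) +
  2 * max_length P * \sum_(y : V) \sum_(k : 'I_(size P)) m P k y.
Proof.
move=> Hps Hg; set L := max_length P.
apply: (@leq_trans (\sum_(y : V) \sum_(k : 'I_(size P))
   (m P k y * \sum_(k' : 'I_(size P)) ((k != k') && good P k k' y : nat) * m P k' y
    + m P k y * L + m P k y * L))).
  apply: leq_sum => y _; rewrite expnS expn1 big_distrl /=; apply: leq_sum => k _.
  rewrite -addnA -mulnDr -!mulnDr leq_mul2l; apply/orP; right.
  apply: leq_trans (M_le k y Hps Hg) _.
  by rewrite (addnC (m P k y)) -addnA leq_add2l leq_add2r m_le.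
rewrite exchange_big /=.
under eq_bigr => k _ do rewrite big_split /= big_split /=.
rewrite big_split /= big_split /=.
rewrite -mulnA mul2n -addnn addnA; apply: leq_add; last first.
  rewrite big_distrr /= exchange_big /=; apply: eq_leq; apply: eq_bigr => y _.
  by rewrite big_distrr /=; apply: eq_bigr => k _; rewrite mulnC.
apply: leq_add; last first.
  rewrite big_distrr /= exchange_big /=; apply: eq_leq; apply: eq_bigr => y _.
  by rewrite big_distrr /=; apply: eq_bigr => k _; rewrite mulnC.
apply: leq_trans (Tupper Hps Hg).
apply: leq_sum => k _; apply: leq_sum => y _.
rewrite big_distrr /=; apply: leq_sum => k' _.
exact: lower_kyk.
Qed.

Definition Fs (l : nat) := \sum_(j < l) minn j (l - j.+1).

Lemma Fs_rec l : Fs l.+2 = Fs l + l.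
Proof.
rewrite /Fs big_ord_recl /= min0n add0n big_ord_recr /=.
have -> : minn l.+1 (l.+2 - l.+2) = 0 by rewrite subnn minn0.
rewrite addn0.
rewrite (eq_bigr (fun j : 'I_l => minn j (l - j.+1) + 1)); last first.
  move=> j _; rewrite /bump /=; have := ltn_ord j; lia.
by rewrite big_split /= sum_nat_const card_ord muln1.
Qed.

Lemma Fs_bound l : l ^ 2 <= 4 * Fs l + 2 * l.
Proof.
elim: l {-2}l (leqnn l) => [|n IH] l hl.
  by move: hl; rewrite leqn0 => /eqP ->.
case: l hl => [|[|l]] hl; first by [].
  by apply: (@leq_trans 2) => //; apply: leq_addl.
rewrite Fs_rec; have := IH l ltac:(lia); lia.
Qed.

Lemma total_eq (V : finType) (P : seq (seq V)) :
  total_length P = \sum_(k : 'I_(size P)) size (Pk P k).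
Proof. by rewrite /total_length (big_nth [::]) big_mkord. Qed.

Lemma sq_eq (V : finType) (P : seq (seq V)) :
  sq_norm P = \sum_(k : 'I_(size P)) size (Pk P k) ^ 2.
Proof. by rewrite /sq_norm (big_nth [::]) big_mkord. Qed.

Lemma Ftot_eq (V : finType) (P : seq (seq V)) : path_system P ->
  \sum_(y : V) \sum_(k : 'I_(size P)) m P k y = \sum_(k : 'I_(size P)) Fs (size (Pk P k)).
Proof.
move=> Hps; rewrite exchange_big /=; apply: eq_bigr => k _.
exact: (sum_index (fun j => minn j (size (Pk P k) - j.+1)) (uniq_Pk k Hps)).
Qed.

Lemma combi (V : finType) (P : seq (seq V)) :
  path_system P -> bridge_girth_gt3 P ->
  let n := #|V| in let S := total_length P in let Q := sq_norm P in
  let L := max_length P in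
  exists F, F ^ 2 <= n * (n * S + 2 * L * F) /\ Q <= 4 * F + 2 * S /\ S ^ 2 <= size P * Q.
Proof.
move=> Hps Hg n S Q L.
exists (\sum_(k : 'I_(size P)) Fs (size (Pk P k))).
split.
  rewrite -Ftot_eq //; apply: leq_trans (cauchy _) _.
  by rewrite /n /S /L leq_mul2l total_eq key ?orbT.
split.
  rewrite /Q /S sq_eq total_eq big_distrr big_distrr -big_split /=.
  by apply: leq_sum => k _; apply: Fs_bound.
rewrite /S /Q total_eq sq_eq.
by have := cauchy (fun k : 'I_(size P) => size (Pk P k)); rewrite card_ord.
Qed.
Lemma arith n L S Q F p : 0 < p -> 4 * p <= S -> S ^ 2 <= p * Q -> Q <= 4 * F + 2 * S ->
  F ^ 2 <= n * (n * S + 2 * L * F) -> Q <= 32 * (n * L) \/ Q ^ 3 <= 128 ^ 2 * (n ^ 4 * p).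
Proof.
move=> p0 hp hS hQ hF.
have h1 : 4 * S <= Q.
  have : p * (4 * S) <= p * Q.
    apply: leq_trans hS; rewrite expnS expn1 mulnCA mulnA leq_mul2r hp orbT //.
  by rewrite leq_pmul2l.
have h2 : Q <= 8 * F by lia.
case: (leqP F (4 * (n * L))) => hc; first by left; lia.
right.
have h3 : F ^ 2 <= 2 * (n ^ 2 * S).
  have e : 4 * (n * L) * F <= F * F by rewrite leq_mul2r (ltnW hc) orbT.
  move: hF e; rewrite !expnS !expn0 !muln1; nia.
have h4 : Q ^ 2 <= 128 * (n ^ 2 * S).
  apply: (@leq_trans (64 * F ^ 2)); last by lia.
  by rewrite (_ : 64 = 8 ^ 2) // -expnMn leq_exp2r.
move: h4; move: (128) => c h4.
have h5 : Q ^ 4 <= c ^ 2 * (n ^ 4 * (p * Q)).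
  apply: (@leq_trans ((c * (n ^ 2 * S)) ^ 2)).
    by rewrite (_ : 4 = 2 * 2) // expnM leq_exp2r.
  have -> : (c * (n ^ 2 * S)) ^ 2 = c ^ 2 * (n ^ 4 * S ^ 2).
    by rewrite !expnMn -expnD.
  by rewrite leq_mul2l leq_mul2l hS !orbT.
case: (posnP Q) => [->|Qp]; first by rewrite exp0n.
move: h5; have -> : c ^ 2 * (n ^ 4 * (p * Q)) = Q * (c ^ 2 * (n ^ 4 * p)) by lia.
by rewrite expnS leq_pmul2l.
Qed.

Open Scope R_scope.

Lemma INR_expn m k : INR (expn m k) = INR m ^ k.
Proof. elim: k => [|k IH]; first by rewrite expn0. by rewrite expnS mult_INR IH. Qed.

Lemma real_fin (Q X R : R) : 0 <= R -> R ^ 3 = X -> Q ^ 3 <= 16384 * X -> Q <= 32 * R.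
Proof.
move=> h0 hR hQ; apply: Rnot_lt_le => hlt.
have hb : (32 * R) ^ 3 <= Q ^ 3 by apply: pow_incr; lra.
have e : (32 * R) ^ 3 = 32768 * R ^ 3 by ring.
case: (Rle_lt_or_eq_dec _ _ h0) => hr.
  have : 0 < R ^ 3 by apply: pow_lt.
  lra.
subst R; have : 0 < Q ^ 3 by apply: pow_lt; lra.
rewrite /= in hR; lra.
Qed.

Lemma real_cube (p n : nat) : (0 < p)%nat -> (0 < n)%nat ->
  (Rpower (INR p) (1/3) * Rpower (INR n) (4/3)) ^ 3 = INR p * INR n ^ 4.
Proof.
move=> hp hn.
have hp' : (0 < INR p) by apply: lt_0_INR; apply/ltP.
have hn' : (0 < INR n) by apply: lt_0_INR; apply/ltP.
rewrite Rpow_mult_distr.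
rewrite -(Rpower_pow 3 (Rpower (INR p) (1/3))); last by rewrite /Rpower; apply: exp_pos.
rewrite -(Rpower_pow 3 (Rpower (INR n) (4/3))); last by rewrite /Rpower; apply: exp_pos.
rewrite !Rpower_mult.
have -> : (1 / 3 * INR 3 = 1) by rewrite /=; field.
have -> : (4 / 3 * INR 3 = INR 4) by rewrite /=; field.
by rewrite Rpower_1 // Rpower_pow.
Qed.


Theorem lemma3p5 :
  exists C0 C : R, 0 < C /\
    forall (V : finType) (P : seq (seq V)),
      path_system P ->
      (0 < size P)%nat ->
      bridge_girth_gt3 P ->
      C0 <= INR (total_length P) / INR (size P) ->
      INR (sq_norm P) <=
        C * (INR #|V| * INR (max_length P)
             + Rpower (INR (size P)) (1/3) * Rpower (INR #|V|) (4/3)).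
Proof.
exists 4, 32; split; first lra.
move=> V P Hps Hp Hg HC.
have hp' : 0 < INR (size P) by apply: lt_0_INR; apply/ltP.
have h4 : (4 * size P <= total_length P)%nat.
  apply/leP; apply: INR_le; rewrite mult_INR.
  have := Rmult_le_compat_r _ _ _ (Rlt_le _ _ hp') HC.
  rewrite /Rdiv Rmult_assoc Rinv_l; last by apply: Rgt_not_eq.
  by rewrite Rmult_1_r /=; lra.
have pos1 : 0 < Rpower (INR (size P)) (1/3) by rewrite /Rpower; apply: exp_pos.
have pos2 : 0 < Rpower (INR #|V|) (4/3) by rewrite /Rpower; apply: exp_pos.
have hnL : 0 <= INR #|V| * INR (max_length P) by apply: Rmult_le_pos; apply: pos_INR.
have [F [hF [hQ hS]]] := combi Hps Hg.
case: (arith Hp h4 hS hQ hF) => hc.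
  have : INR (sq_norm P) <= INR (32 * (#|V| * max_length P)) by apply: le_INR; apply/leP.
  rewrite !mult_INR (_ : INR 32 = 32); last by rewrite INR_IZR_INZ.
  have := Rmult_lt_0_compat _ _ pos1 pos2; lra.
case: (posnP #|V|) => [n0|npos].
  have hQ0 : sq_norm P = 0%N.
    by move: hc; rewrite n0 exp0n // mul0n muln0 leqn0 expn_eq0 => /andP [/eqP -> _].
  rewrite hQ0 /=; have := Rmult_lt_0_compat _ _ pos1 pos2; move=> hpos.
  apply: Rmult_le_pos; first by apply: IZR_le.
  by apply: Rplus_le_le_0_compat; [exact: hnL | apply: Rlt_le].
have hc' : INR (sq_norm P) ^ 3 <= 16384 * (INR #|V| ^ 4 * INR (size P)).
  have := le_INR _ _ (elimT leP hc) => hh; rewrite !INR_expn !mult_INR ?INR_expn in hh.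
  rewrite (_ : INR 128 = 128) in hh; last by rewrite INR_IZR_INZ.
  lra.
have hR := real_cube Hp npos.
have h0 : 0 <= Rpower (INR (size P)) (1/3) * Rpower (INR #|V|) (4/3).
  by apply: Rlt_le; apply: Rmult_lt_0_compat.
have := real_fin h0 hR.
move=> /(_ (INR (sq_norm P))) hfin.
rewrite (Rmult_comm (INR (size P))) in hfin.
have := hfin hc'; have := Rmult_lt_0_compat _ _ pos1 pos2; lra.
Qed.
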